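(* A point $(\bar x,\bar y)\in X\times Y$ is a calm local minimax point of $\min_{x\in X}\max_{y\in Y}f(x,y)$ if and only if there exist $\delta_0>0$ and a radius function $\tau$ such that (1) for every $\delta\in(0,\delta_0]$, $x\in X\cap\mathbb{B}_\delta(\bar x)$ and $y\in Y\cap\mathbb{B}_\delta(\bar y)$: $f(\bar x,y)\le f(\bar x,\bar y)\le\max_{y'\in Y\cap\mathbb{B}_{\tau(\|x-\bar x\|)}(\bar y)}f(x,y')$ (so in particular $(\bar x,\bar y)$ is a local minimax point), and (2) the optimal solution mapping $S_{\tau}(x):=\operatorname{argmax}_{y\in Y\cap\mathbb{B}_{\tau(\|x-\bar x\|)}(\bar y)}f(x,y)$ is inner calm at $(\bar x,\bar y)$ with respect to $X$.
   Context: $X\subseteq\mathbb{R}^n$, $Y\subseteq\mathbb{R}^m$ are nonempty closed sets and $f:\mathbb{R}^n\times\mathbb{R}^m\to\mathbb{R}$. $\mathbb{B}_\epsilon(z)$ is the closed Euclidean ball, $\mathbb{B}$ the closed unit ball. Standing assumption: for every $x\in X$, every $\bar y\in Y$ and every $\epsilon\ge0$ the maximum of $f(x,\cdot)$ over $Y\cap\mathbb{B}_\epsilon(\bar y)$ is attained. A radius function is a map $\tau:[0,\infty)\to[0,\infty)$ with $\tau(0)=0$ and $\tau(\delta)\to0$ as $\delta\downarrow0$; it is calm at $0$ if there exist $\kappa>0$, $\delta_1>0$ with $\tau(\delta)\le\kappa\delta$ for all $\delta\in[0,\delta_1]$. $(\bar x,\bar y)\in X\times Y$ is a local minimax point if there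 exist $\delta_0>0$ and a radius function $\tau$ such that for all $\delta\in(0,\delta_0]$, $x\in X\cap\mathbb{B}_\delta(\bar x)$, $y\in Y\cap\mathbb{B}_\delta(\bar y)$: $f(\bar x,y)\le f(\bar x,\bar y)\le\max_{y'\in Y\cap\mathbb{B}_{\tau(\delta)}(\bar y)}f(x,y')$; it is a calm local minimax point if this holds with $\tau$ calm at $0$. A set-valued map $\Gamma:\mathbb{R}^n\rightrightarrows\mathbb{R}^m$ with $\bar y\in\Gamma(\bar x)$ is inner calm at $(\bar x,\bar y)$ with respect to $X$ if there exist $\kappa>0$, $\delta_0>0$ such that $\bar y\in\Gamma(x)+\kappa\|x-\bar x\|\mathbb{B}$ for all $x\in\mathbb{B}_{\delta_0}(\bar x)\cap X$. *)

(* Defs.v *)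
From HB Require Import structures.
From mathcomp Require Import all_boot all_order all_algebra.
From mathcomp Require Import all_classical all_reals all_analysis.
Set Implicit Arguments. Unset Strict Implicit. Unset Printing Implicit Defensive.
Import Order.TTheory GRing.Theory Num.Theory.
Import numFieldNormedType.Exports.
Local Open Scope classical_set_scope.
Local Open Scope ring_scope.

Section Defs.
Variable R : realType.

Definition enorm (n : nat) (v : 'rV[R]_n) : R :=
  Num.sqrt (\sum_(i < n) (v ord0 i) ^+ 2).

Definition eball (n : nat) (c : 'rV[R]_n) (eps : R) : set 'rV[R]_n :=
  [set z | enorm (z - c) <= eps].

Variables (n m : nat) (X : set 'rV[R]_n) (Y : set 'rV[R]_m)
  (f : 'rV[R]_n -> 'rV[R]_m -> R).

Definition max_attained : Prop :=
  forall x ybar eps, X x -> Y ybar -> 0 <= eps ->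
    exists2 ys, (Y `&` eball ybar eps) ys &
      forall y, (Y `&` eball ybar eps) y -> f x y <= f x ys.

(* max_{y' in Y ∩ B_eps(ybar)} f(x,y') (a sup, equal to the max under max_attained) *)
Definition maxf (x : 'rV[R]_n) (ybar : 'rV[R]_m) (eps : R) : R :=
  sup [set f x y | y in Y `&` eball ybar eps].

(* radius function, defined on [0,oo) *)
Definition radius_fun (tau : R -> R) : Prop :=
  (forall d, 0 <= d -> 0 <= tau d) /\ tau 0 = 0 /\ tau d @[d --> 0^'+] --> 0.

Definition calm_at0 (tau : R -> R) : Prop :=
  exists kappa, exists delta1, 0 < kappa /\ 0 < delta1 /\
    forall d, 0 <= d <= delta1 -> tau d <= kappa * d.

Definition minimax_cond (xbar : 'rV[R]_n) (ybar : 'rV[R]_m) (delta0 : R)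
    (tau : R -> R) : Prop :=
  forall delta x y, 0 < delta <= delta0 ->
    (X `&` eball xbar delta) x -> (Y `&` eball ybar delta) y ->
    f xbar y <= f xbar ybar /\ f xbar ybar <= maxf x ybar (tau delta).

Definition local_minimax (xbar : 'rV[R]_n) (ybar : 'rV[R]_m) : Prop :=
  X xbar /\ Y ybar /\
  exists delta0, exists tau, 0 < delta0 /\ radius_fun tau /\
    minimax_cond xbar ybar delta0 tau.

Definition calm_local_minimax (xbar : 'rV[R]_n) (ybar : 'rV[R]_m) : Prop :=
  X xbar /\ Y ybar /\
  exists delta0, exists tau, 0 < delta0 /\ radius_fun tau /\ calm_at0 tau /\
    minimax_cond xbar ybar delta0 tau.

Definition S_tau (tau : R -> R) (xbar : 'rV[R]_n) (ybar : 'rV[R]_m)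
    (x : 'rV[R]_n) : set 'rV[R]_m :=
  [set y | (Y `&` eball ybar (tau (enorm (x - xbar)))) y /\
     forall y', (Y `&` eball ybar (tau (enorm (x - xbar)))) y' -> f x y' <= f x y].

End Defs.

Definition inner_calm (R : realType) (n m : nat) (Gamma : 'rV[R]_n -> set 'rV[R]_m)
    (X : set 'rV[R]_n) (xbar : 'rV[R]_n) (ybar : 'rV[R]_m) : Prop :=
  Gamma xbar ybar /\
  exists kappa, exists delta0, 0 < kappa /\ 0 < delta0 /\
    forall x, (eball xbar delta0 `&` X) x ->
      exists2 y, Gamma x y & enorm (ybar - y) <= kappa * enorm (x - xbar).

(* Main.v *)
Require Import Defs.
From HB Require Import structures.
From mathcomp Require Import all_boot all_order all_algebra.
From mathcomp Require Import all_classical all_reals all_analysis.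
Import Order.TTheory GRing.Theory Num.Theory.
Import numFieldNormedType.Exports.
Local Open Scope classical_set_scope.
Local Open Scope ring_scope.

Section Helpers.
Variable R : realType.

Lemma enorm_ge0 k (v : 'rV[R]_k) : 0 <= enorm v.
Proof. exact: sqrtr_ge0. Qed.

Lemma enormN k (v : 'rV[R]_k) : enorm (- v) = enorm v.
Proof.
rewrite /enorm; congr Num.sqrt; apply: eq_bigr => i _; by rewrite mxE sqrrN.
Qed.

Lemma enorm0 k : enorm (0 : 'rV[R]_k) = 0.
Proof.
rewrite /enorm big1 ?sqrtr0 // => i _; by rewrite mxE expr0n.
Qed.

Lemma enorm_eq0 k (v : 'rV[R]_k) : enorm v = 0 -> v = 0.
Proof.
move=> /eqP; rewrite sqrtr_eq0 => H.
have H0 : \sum_(i < k) (v ord0 i) ^+ 2 = 0.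
  apply/eqP; rewrite eq_le H /=; apply: sumr_ge0 => i _; exact: sqr_ge0.
have := (psumr_eq0P (fun i _ => sqr_ge0 (v ord0 i)) H0) => Hi.
apply/rowP => i; rewrite mxE; apply/eqP; rewrite -sqrf_eq0; apply/eqP; exact: Hi.
Qed.

Lemma enormB k (u v : 'rV[R]_k) : enorm (u - v) = enorm (v - u).
Proof. by rewrite -enormN opprB. Qed.

Variables (n m : nat) (X : set 'rV[R]_n) (Y : set 'rV[R]_m)
  (f : 'rV[R]_n -> 'rV[R]_m -> R).

Lemma maxf_ge x ybar eps y : max_attained X Y f -> X x -> Y ybar -> 0 <= eps ->
  (Y `&` eball ybar eps) y -> f x y <= maxf Y f x ybar eps.
Proof.
move=> hm Xx Yy e0 Hy; have [ys Hys Hmax] := hm x ybar eps Xx Yy e0.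
apply: sup_upper_bound; last by exists y.
split; first by exists (f x y), y.
exists (f x ys) => _ [z Hz <-]; exact: Hmax.
Qed.

Lemma maxf_le x ybar eps y : (Y `&` eball ybar eps) y ->
  (forall y', (Y `&` eball ybar eps) y' -> f x y' <= f x y) ->
  maxf Y f x ybar eps <= f x y.
Proof.
move=> Hy Hmax; apply: ge_sup; first by exists (f x y), y.
move=> _ [z Hz <-]; exact: Hmax.
Qed.

End Helpers.
Arguments enorm_ge0 {R k}.
Arguments enormN {R k}.
Arguments enorm0 {R k}.
Arguments enorm_eq0 {R k}.
Arguments enormB {R k}.
Arguments maxf_ge {R n m X Y f x ybar eps y}.
Arguments maxf_le {R n m Y f x ybar eps y}.

Theorem mainTheorem6 (R : realType) (n m : nat) (X : set 'rV[R]_n)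
    (Y : set 'rV[R]_m) (f : 'rV[R]_n -> 'rV[R]_m -> R)
    (xbar : 'rV[R]_n) (ybar : 'rV[R]_m) :
  closed X -> closed Y -> X !=set0 -> Y !=set0 ->
  max_attained X Y f ->
  X xbar -> Y ybar ->
  calm_local_minimax X Y f xbar ybar <->
  exists delta0, exists tau, 0 < delta0 /\ radius_fun tau /\
    (forall delta x y, 0 < delta <= delta0 ->
      (X `&` eball xbar delta) x -> (Y `&` eball ybar delta) y ->
      f xbar y <= f xbar ybar /\
      f xbar ybar <= maxf Y f x ybar (tau (enorm (x - xbar)))) /\
    inner_calm (S_tau Y f tau xbar ybar) X xbar ybar.
Proof.
move=> _ _ _ _ hm Xx Yy; split.
- move=> [_ [_ [d0 [tau [d0p [rt [[k [d1 [kp [d1p calm]]]] mm]]]]]]].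
  have [tge0 [t0 _]] := rt.
  have Yb : forall e, 0 <= e -> (Y `&` eball ybar e) ybar.
    by move=> e e0; split => //; rewrite /eball /= subrr enorm0.
  exists d0, tau; split => //; split => //; split.
  + move=> delta x y dd Hx Hy; split; first exact: (mm delta x y dd Hx Hy).1.
    have [hd|hd] := eqVneq (enorm (x - xbar)) 0.
      have ex : x = xbar by apply/eqP; rewrite -subr_eq0; apply/eqP; exact: enorm_eq0.
      rewrite hd t0; subst x; exact: (maxf_ge hm Xx Yy (lexx 0) (Yb 0 (lexx 0))).
    have dpos : 0 < enorm (x - xbar) by rewrite lt_def hd enorm_ge0.
    case: Hx => Xx' Hx'.
    have dle : enorm (x - xbar) <= d0.
      move: dd => /andP [_ h]; exact: le_trans Hx' h.
    have dd' : 0 < enorm (x - xbar) <= d0 by rewrite dpos dle.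
    have hx' : (X `&` eball xbar (enorm (x - xbar))) x by split => //; rewrite /eball /= lexx.
    exact: (mm _ x ybar dd' hx' (Yb _ (enorm_ge0 (x - xbar)))).2.
  + split.
      rewrite /S_tau /= subrr enorm0 t0; split; first exact: Yb.
      move=> y' Hy'.
      have dd : 0 < d0 <= d0 by rewrite d0p lexx.
      have hx : (X `&` eball xbar d0) xbar by split => //; rewrite /eball /= subrr enorm0 ltW.
      have hy : (Y `&` eball ybar d0) y'.
        case: Hy' => Yy' Hy'; split => //; rewrite /eball /=.
        exact: le_trans Hy' (ltW d0p).
      exact: (mm d0 xbar y' dd hx hy).1.
    exists k, d1; split => //; split => // x [Hx Xx'].
    have e0 := tge0 _ (enorm_ge0 (x - xbar)).
    have [ys Hys Hmax] := hm x ybar _ Xx' Yy e0.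
    exists ys; first by split.
    rewrite enormB; case: Hys => _ Hys; apply: le_trans Hys _.
    by apply: calm; rewrite enorm_ge0.
- move=> [d0 [tau [d0p [rt [H1 [_ [k [d1 [kp [d1p Hic]]]]]]]]]].
  split => //; split => //.
  exists (Num.min d0 d1), (fun d => k * d); split; first by rewrite lt_min d0p d1p.
  split.
    split; first by move=> d d0'; rewrite mulr_ge0 // ltW.
    split; first by rewrite mulr0.
    apply: cvg_at_right_filter.
    have h : (fun d : R => k * d) @ (0 : R) --> k * 0 by apply: cvgMr; exact: cvg_id.
    by rewrite mulr0 in h.
  split.
    exists k, 1; split => //; split => //; by move=> d _.
  move=> delta x y /andP [dp]; rewrite le_min => /andP [dd0 dd1] Hx Hy.
  have dd : 0 < delta <= d0 by rewrite dp dd0.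
  split; first exact: (H1 delta x y dd Hx Hy).1.
  case: (Hx) => Xx' Hx'.
  have [ys [Hys Hmax] Hn] := Hic x (conj (le_trans Hx' dd1) Xx').
  have := (H1 delta x y dd Hx Hy).2 => Hge.
  apply: le_trans Hge _; apply: le_trans (maxf_le Hys Hmax) _.
  have e0 : 0 <= k * delta by rewrite mulr_ge0 // ltW.
  have hy : (Y `&` eball ybar (k * delta)) ys.
    case: Hys => Yys _; split => //; rewrite /eball /= enormB.
    apply: le_trans Hn _; rewrite ler_wpM2l // ltW //.
  exact: (maxf_ge hm Xx' Yy e0 hy).
Qed.
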